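(* Let $X$ be a separable absolutely neighbourhood star-Menger space. If $Y$ is a closed and discrete subset of $X$, then $|Y|<\mathfrak{d}$.
   Context: All spaces are regular. $St(A,\mathcal{U})=\bigcup\{U\in\mathcal{U}:U\cap A\neq\emptyset\}$. $\mathfrak{d}$ is the dominating number. $X$ is absolutely neighbourhood star-Menger if for each sequence $(\mathcal{U}_n:n\in\omega)$ of open covers of $X$ and each dense subset $D$ of $X$ there is a sequence $(F_n:n\in\omega)$ of finite subsets of $D$ such that for any open sets $O_n$ with $F_n\subseteq O_n$ ($n\in\omega$), $\{St(O_n,\mathcal{U}_n):n\in\omega\}$ covers $X$. *)

(* Defs.v *)
From HB Require Import structures.
From mathcomp Require Import all_boot all_order.
From mathcomp Require Import boolp classical_sets functions cardinality topology.
Set Implicit Arguments. Unset Strict Implicit. Unset Printing Implicit Defensive.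
Local Open Scope classical_set_scope.

Definition star (T : Type) (A : set T) (U : set (set T)) : set T :=
  \bigcup_(V in [set V | U V /\ V `&` A !=set0]) V.

Definition open_cover (T : topologicalType) (U : set (set T)) : Prop :=
  (forall V, U V -> open V) /\ \bigcup_(V in U) V = setT.

Definition separable_space (T : topologicalType) : Prop :=
  exists D : set T, countable D /\ dense D.

Definition absolutely_nbhd_star_Menger (T : topologicalType) : Prop :=
  forall (U : nat -> set (set T)) (D : set T),
    (forall n, open_cover (U n)) -> dense D ->
    exists F : nat -> set T,
      (forall n, finite_set (F n) /\ F n `<=` D) /\
      forall O : nat -> set T,
        (forall n, open (O n) /\ F n `<=` O n) ->
        \bigcup_n star (O n) (U n) = setT.

Definition closed_discrete (T : topologicalType) (Y : set T) : Prop :=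
  closed Y /\ forall y, Y y -> exists V : set T, open V /\ V `&` Y = [set y].

Definition le_star (f g : nat -> nat) : Prop :=
  exists m, forall n, (m <= n)%N -> (f n <= g n)%N.

Definition dominating (F : set (nat -> nat)) : Prop :=
  forall f, exists2 g, F g & le_star f g.

(* |A| < d : no dominating family has cardinality <= |A|
   (d is the least cardinality of a dominating family) *)
Definition card_lt_dominating (T : Type) (A : set T) : Prop :=
  forall F : set (nat -> nat), (F #<= A)%card -> ~ dominating F.

(* Main.v *)
Require Import Defs.
From mathcomp Require Import all_boot all_order.
From mathcomp Require Import boolp classical_sets functions cardinality topology.
Local Open Scope classical_set_scope.

Lemma fin_bound (T : eqType) (code : T -> nat) (A : set T) :
  finite_set A -> exists b, forall x, A x -> (code x <= b)%N.
Proof.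
move=> /finite_seqP [s ->].
elim: s => [|a s [b Hb]]; first by exists 0%N.
exists (maxn (code a) b) => x /=; rewrite inE => /orP [/eqP ->|xs].
  by rewrite leq_maxl.
by apply: leq_trans (Hb x xs) (leq_maxr _ _).
Qed.

Lemma card_le_fun (A : Type) (T : Type) (F : set A) (Y : set T) (g0 : A) :
  F g0 -> (F #<= Y)%card -> exists io : A -> T,
   (forall g, F g -> Y (io g)) /\ (forall g h, F g -> F h -> io g = io h -> g = h).
Proof.
move=> Fg0; case/card_leP => f.
pose y0 := \val (f (SigSub (mem_set Fg0))).
exists (fun g => match pselect (F g) with left Fg => \val (f (SigSub (mem_set Fg))) | right _ => y0 end).
split.
  move=> g Fg; case: pselect => // Fg'.
  exact: (set_valP (f (SigSub (mem_set Fg')))).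
move=> g h Fg Fh; case: pselect => // Fg'; case: pselect => // Fh' /val_inj.
move/(@inj _ _ _ f); rewrite ?inE // => /(_ I I) E.
by have := congr1 val E.
Qed.

Theorem mainTheorem8 (T : topologicalType) (Y : set T) :
  regular_space T -> separable_space T -> absolutely_nbhd_star_Menger T ->
  closed_discrete Y -> card_lt_dominating Y.
Proof.
move=> reg [D [cD dD]] ansm [clY discY] F FY domF.
have [g0 Fg0 _] := domF (fun=> 0%N).
have [io [ioF ioI]] := @card_le_fun _ _ F Y g0 Fg0 FY.
have [code codeI] := pcard_injP cD.
pose y0 : T := io g0.
have [Vf HV] : exists Vf : T -> set T, forall y, Y y -> open (Vf y) /\ Vf y `&` Y = [set y].
  have : forall y, exists V : set T, Y y -> open V /\ V `&` Y = [set y].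
    move=> y; have [Yy|nYy] := pselect (Y y).
      by have [V HV] := discY y Yy; exists V.
    by exists set0.
  by case/choice => Vf HV; exists Vf.
have Vfy y : Y y -> Vf y y.
  by move=> Yy; have [_ E] := HV y Yy; have : [set y] y by []; rewrite -E => -[].
have nclos y e : Y y -> e <> y -> ~ closure [set y] e.
  move=> Yy ney cle.
  have Ye : Y e by apply: clY; apply: (closureS _ cle) => _ ->.
  have [oV _] := HV e Ye.
  have [z [/= zy Vz]] := cle (Vf e) (open_nbhs_nbhs (conj oV (Vfy e Ye))).
  subst z; have [_ E] := HV e Ye.
  have : (Vf e `&` Y) y by [].
  by rewrite E => /= ye; apply: ney.
have [Cf HC] : exists Cf : T -> T -> set T, forall y e,
    closed (Cf y e) /\ ~ Cf y e y /\ (Y y -> e <> y -> nbhs e (Cf y e)).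
  have : forall p : T * T, exists C : set T,
    closed C /\ ~ C p.1 /\ (Y p.1 -> p.2 <> p.1 -> nbhs p.2 C); last first.
    by case/choice => Cf HC; exists (fun y e => Cf (y, e)) => y e; exact: (HC (y, e)).
    case=> y e /=.
    have [[Yy ney]|] := pselect (Y y /\ e <> y); last first.
      move=> H; exists set0; split; first exact: closed0.
      by split => // Yy ney; exfalso; apply: H.
    have oN : open (~` closure [set y]) by rewrite openC; exact: closed_closure.
    have Ne : nbhs e (~` closure [set y]).
      by apply: open_nbhs_nbhs; split => //; exact: nclos.
    have [B Be BN] := reg e _ Ne.
    exists (closure B); split; first exact: closed_closure.
    split; first by move=> /BN; apply; exact: subset_closure.
    by move=> _ _; apply: filterS Be; exact: subset_closure.
pose d (i : nat) : T := xget y0 [set e | D e /\ code e = i].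
have dcode e : D e -> d (code e) = e.
  move=> De; have : exists x, [set e0 | D e0 /\ code e0 = code e] x by exists e.
  move=> /(xgetPex y0) [Dx cx]; rewrite -/(d _) in Dx cx *.
  by apply: codeI; rewrite ?inE.
pose psi (y : T) : nat -> nat := xget g0 [set g | F g /\ io g = y].
have psiio g : F g -> psi (io g) = g.
  move=> Fg; have : exists x, [set h | F h /\ io h = io g] x by exists g.
  move=> /(xgetPex g0) [Fx ix]; rewrite -/(psi _) in Fx ix *.
  exact: ioI.
pose W (y : T) (n : nat) : set T :=
  Vf y `&` ~` (\bigcup_(i in `I_(psi y n).+1) Cf y (d i)).
pose U (n : nat) : set (set T) := [set ~` Y] `|` [set W y n | y in Y].
have Ucov n : open_cover (U n).
  split.
    move=> V [-> | [y Yy <-]]; first by rewrite openC.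
    apply: openI; first by case: (HV y Yy).
    rewrite openC; apply: closed_bigcup; first exact: finite_II.
    by move=> i _; case: (HC y (d i)).
  apply/seteqP; split => // x _.
  have [Yx|nYx] := pselect (Y x).
    exists (W x n); first by right; exists x.
    split; first exact: Vfy.
    by move=> [i _]; case: (HC x (d i)) => _ [].
  by exists (~` Y) => //; left.
have : forall m, exists Fm : nat -> set T,
    (forall n, finite_set (Fm n) /\ Fm n `<=` D) /\
    forall O : nat -> set T, (forall n, open (O n) /\ Fm n `<=` O n) ->
      \bigcup_n star (O n) (U (n + m)%N) = setT.
  by move=> m; apply: ansm => // n; exact: Ucov.
case/choice => FF HFF.
have : forall p : nat * nat, exists b, forall x, FF p.1 p.2 x -> (code x <= b)%N.
  by case=> m k; apply: fin_bound; case: (HFF m) => /(_ k) [].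
case/choice => bb Hbb.
pose h (n : nat) : nat := \max_(m < n.+1) (bb (val m, n - val m) + psi (d (val m)) n).+1.
have hge m n : (m <= n)%N -> (bb (m, n - m) + psi (d m) n < h n)%N.
  move=> mn; have mn' : (m < n.+1)%N by [].
  exact: (leq_bigmax (F := fun m : 'I_n.+1 => (bb (val m, n - val m) + psi (d (val m)) n).+1) (Ordinal mn')).
have [f Ff [M HM]] := domF h.
have Yy := ioF f Ff.
have psif := psiio f Ff.
set y := io f in Yy psif.
have nDy : ~ D y.
  move=> Dy; have := HM (maxn M (code y)) (leq_maxl _ _).
  have := hge (code y) (maxn M (code y)) (leq_maxr _ _).
  rewrite dcode // psif => H1 H2.
  have := leq_ltn_trans H2 (leq_ltn_trans (leq_addl _ _) H1).
  by rewrite ltnn.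
pose O (k : nat) : set T := interior (\bigcup_(i in `I_(f (k + M)%N).+1) Cf y (d i)).
have [_ HO] := HFF M.
have := HO O.
have hO : forall k, open (O k) /\ FF M k `<=` O k.
  move=> k; split; first exact: open_interior.
  move=> e Fe.
  have De : D e := ((HFF M).1 k).2 e Fe.
  have ney : e <> y by move=> ey; apply: nDy; rewrite -ey.
  have cb : (code e <= f (k + M))%N.
    apply: leq_trans (Hbb (M, k) e Fe) _.
    apply: leq_trans (HM (k + M)%N (leq_addl _ _)).
    have := hge M (k + M)%N (leq_addl _ _).
    rewrite addnK => H; apply: ltnW; exact: leq_ltn_trans (leq_addr _ _) H.
  rewrite /O /interior /=.
  have [_ [_ Hn]] := HC y e.
  apply: filterS (Hn Yy ney) => z Cz.
  by exists (code e); [rewrite /= ltnS | rewrite dcode].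
move=> /(_ hO) E.
have : [set: T] y by [].
rewrite -E => -[k _ [V [UV [z [Vz Oz]]] Vy]].
case: UV => [Vc|[y' Yy' Wy']]; first by rewrite Vc in Vy.
subst V.
have yy' : y = y'.
  have [_ Ey'] := HV y' Yy'.
  have : (Vf y' `&` Y) y by split => //; case: Vy.
  by rewrite Ey'.
subst y'.
case: Vz => _; apply; rewrite psif.
exact: interior_subset.
Qed.
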